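(* Let $\bar a>0$, $X=[0,\bar a]$, and let $f:\mathbb{R}_{\ge0}\to\mathbb{R}_{\ge0}$ satisfy: (i) $f$ is $L$-Lipschitz; (ii) the restriction of $f$ to $X$ is strictly concave; (iii) $f(x)=0$ for all $x\ge\bar a$. Let $0<\alpha\le\frac{1}{L+1}$ and $g(x)=\alpha f(x)+(1-\alpha)x$. Then $g$ restricted to $X$ satisfies: $g$ maps $X$ into $X$; $g$ is strictly concave and Lipschitz continuous on $X$; $g(x)\ge0$ for all $x\in X$; with $\bar x$ the maximizer of $g$ on $X$, the restriction of $g$ to $[\bar x,\bar a]$ is Lipschitz with some constant strictly less than $1$; and there is a positive $b\in X$ with $g(b)<b$. Moreover, for every $x_0>0$, the fixed-point iteration $x_{k+1}=g(x_k)$ converges to a fixed point of $f$.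
   Context: A function $f$ is $L$-Lipschitz if $|f(x)-f(y)|\le L|x-y|$ for all $x,y$; Lipschitz continuous if $L$-Lipschitz for some $L>0$. $f$ is strictly concave on an interval if $f((1-\lambda)x+\lambda y)>(1-\lambda)f(x)+\lambda f(y)$ for all $x\ne y$ in it and $0<\lambda<1$. *)

(* Defs.v *)
From Stdlib Require Import Reals.
Open Scope R_scope.

Definition lipschitz_on (D : R -> Prop) (K : R) (f : R -> R) : Prop :=
  forall x y, D x -> D y -> Rabs (f x - f y) <= K * Rabs (x - y).

Definition strictly_concave_on (D : R -> Prop) (f : R -> R) : Prop :=
  forall x y lam, D x -> D y -> x <> y -> 0 < lam < 1 ->
    f ((1 - lam) * x + lam * y) > (1 - lam) * f x + lam * f y.

Definition Icc (a b : R) : R -> Prop := fun x => a <= x <= b.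

Definition Rnonneg : R -> Prop := fun x => 0 <= x.

Definition relax (alpha : R) (f : R -> R) (x : R) : R :=
  alpha * f x + (1 - alpha) * x.

(* Main.v *)
Require Import Defs.
From Stdlib Require Import Reals Lra Lia.
Open Scope R_scope.

Lemma abs_bnd (a b : R) : Rabs a <= b -> - b <= a <= b.
Proof. unfold Rabs; destruct (Rcase_abs a); intros; lra. Qed.

Lemma abs_le (a b : R) : - b <= a <= b -> Rabs a <= b.
Proof. unfold Rabs; destruct (Rcase_abs a); intros; lra. Qed.

Theorem mainTheorem9 (abar L alpha : R) (f : R -> R)
  (habar : 0 < abar)
  (hL : 0 < L)
  (hfnn : forall x, 0 <= x -> 0 <= f x)
  (hlip : lipschitz_on Rnonneg L f)
  (hconc : strictly_concave_on (Icc 0 abar) f)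
  (hzero : forall x, abar <= x -> f x = 0)
  (halpha : 0 < alpha <= 1 / (L + 1)) :
  let g := relax alpha f in
  (forall x, Icc 0 abar x -> Icc 0 abar (g x)) /\
  strictly_concave_on (Icc 0 abar) g /\
  (exists K, 0 < K /\ lipschitz_on (Icc 0 abar) K g) /\
  (forall x, Icc 0 abar x -> 0 <= g x) /\
  (exists xbar, Icc 0 abar xbar /\ forall x, Icc 0 abar x -> g x <= g xbar) /\
  (forall xbar, Icc 0 abar xbar -> (forall x, Icc 0 abar x -> g x <= g xbar) ->
     exists c, 0 < c < 1 /\ lipschitz_on (Icc xbar abar) c g) /\
  (exists b, 0 < b <= abar /\ g b < b) /\
  (forall (x0 : R) (x : nat -> R), 0 < x0 -> x 0%nat = x0 ->
     (forall k, x (S k) = g (x k)) ->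
     exists p, 0 <= p /\ f p = p /\ Un_cv x p).
Proof.
  intro g.
  assert (hA : alpha * (L + 1) <= 1).
  { destruct halpha as [_ h].
    apply Rmult_le_compat_r with (r := L + 1) in h; [|lra].
    replace (1 / (L + 1) * (L + 1)) with 1 in h by (field; lra). exact h. }
  assert (hAL : alpha * L < 1) by nra.
  assert (ha1 : alpha < 1) by nra.
  assert (gE : forall x, g x = alpha * f x + (1 - alpha) * x) by reflexivity.
  assert (fb : forall x y, 0 <= x -> x <= y ->
            - (L * (y - x)) <= f x - f y <= L * (y - x)).
  { intros x y hx hxy. apply abs_bnd.
    replace (y - x) with (Rabs (x - y)).
    - apply hlip; unfold Rnonneg; lra.
    - rewrite Rabs_minus_sym; apply Rabs_pos_eq; lra. }
  assert (gmono : forall x y, 0 <= x -> x <= y -> g x <= g y).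
  { intros x y hx hxy. rewrite !gE. destruct (fb x y hx hxy) as [_ h2].
    assert (alpha * (f x - f y) <= alpha * (L * (y - x))) by
      (apply Rmult_le_compat_l; lra).
    nra. }
  set (K := alpha * L + (1 - alpha)).
  assert (glip : forall x y, 0 <= x -> 0 <= y -> Rabs (g x - g y) <= K * Rabs (x - y)).
  { assert (H : forall x y, 0 <= x -> x <= y -> Rabs (g x - g y) <= K * Rabs (x - y)).
    { intros x y hx hxy. destruct (fb x y hx hxy) as [h1 h2].
      rewrite (Rabs_minus_sym x y), (Rabs_pos_eq (y - x)) by lra.
      apply abs_le. rewrite !gE. unfold K.
      assert (alpha * (f x - f y) <= alpha * (L * (y - x))) by
        (apply Rmult_le_compat_l; lra).
      assert (alpha * (- (L * (y - x))) <= alpha * (f x - f y)) by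
        (apply Rmult_le_compat_l; lra).
      nra. }
    intros x y hx hy. destruct (Rle_dec x y).
    - apply H; lra.
    - rewrite Rabs_minus_sym, (Rabs_minus_sym x y). apply H; lra. }
  assert (Kpos : 0 < K) by (unfold K; nra).
  assert (gX : forall x, Icc 0 abar x -> Icc 0 abar (g x)).
  { intros x [h0 h1]. split.
    - rewrite gE. pose proof (hfnn x h0). nra.
    - destruct (fb x abar h0 h1) as [_ h2]. rewrite (hzero abar (Rle_refl _)) in h2.
      rewrite gE.
      assert (alpha * f x <= alpha * (L * (abar - x))) by
        (apply Rmult_le_compat_l; lra).
      nra. }
  split; [exact gX|].
  split.
  { intros x y lam hx hy hxy hlam.
    pose proof (hconc x y lam hx hy hxy hlam) as hc.
    rewrite !gE.
    apply Rmult_lt_compat_l with (r := alpha) in hc; [|lra].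
    nra. }
  split; [exists K; split; [exact Kpos|]; intros x y [hx _] [hy _]; apply glip; lra|].
  split; [intros x hx; exact (proj1 (gX x hx))|].
  split.
  { exists abar. split; [unfold Icc; lra|]. intros x [h0 h1]. apply gmono; lra. }
  split.
  { intros xbar [hb0 hb1] hmax. exists (1/2). split; [lra|].
    assert (key : forall x y, xbar <= x -> x < y -> y <= abar -> g x = g y).
    { intros x y hx hxy hy.
      assert (le1 : g x <= g y) by (apply gmono; lra).
      destruct (Req_dec x xbar) as [->|hne].
      - assert (g y <= g xbar) by (apply hmax; unfold Icc; lra). lra.
      - exfalso.
        set (lam := (x - xbar) / (y - xbar)).
        assert (hl : 0 < lam < 1).
        { unfold lam; split.
          - apply Rdiv_lt_0_compat; lra.
          - apply Rmult_lt_reg_r with (r := y - xbar); [lra|].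
            unfold Rdiv. rewrite Rmult_assoc, Rinv_l by lra. lra. }
        assert (hxe : (1 - lam) * xbar + lam * y = x).
        { unfold lam. field. lra. }
        pose proof (hconc_g := hconc). 
        assert (hc : g ((1 - lam) * xbar + lam * y) > (1 - lam) * g xbar + lam * g y).
        { pose proof (hconc xbar y lam) as hc.
          assert (hc' : f ((1 - lam) * xbar + lam * y) > (1 - lam) * f xbar + lam * f y)
            by (apply hc; unfold Icc; lra).
          rewrite !gE.
          apply Rmult_lt_compat_l with (r := alpha) in hc'; [|lra]. nra. }
        rewrite hxe in hc.
        assert (g y <= g xbar) by (apply hmax; unfold Icc; lra).
        nra. }
    intros x y [hx1 hx2] [hy1 hy2].
    destruct (Rtotal_order x y) as [h|[h|h]].
    - rewrite (key x y) by lra. rewrite Rminus_diag, Rabs_R0.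
      pose proof (Rabs_pos (x - y)); lra.
    - subst. rewrite !Rminus_diag, !Rabs_R0. lra.
    - rewrite (key y x) by lra. rewrite Rminus_diag, Rabs_R0.
      pose proof (Rabs_pos (x - y)); lra. }
  split.
  { exists abar. split; [lra|]. rewrite gE, (hzero abar (Rle_refl _)). nra. }
  intros x0 x hx0 hx00 hxS.
  assert (gpos : forall y, 0 < y -> 0 < g y).
  { intros y hy. rewrite gE. pose proof (hfnn y (Rlt_le _ _ hy)). nra. }
  assert (xpos : forall k, 0 < x k).
  { induction k; [rewrite hx00; lra|rewrite hxS; apply gpos; auto]. }
  set (M := Rmax x0 abar).
  assert (gM : forall y, 0 <= y <= M -> g y <= M).
  { intros y [h0 h1]. destruct (Rle_dec y abar).
    - pose proof (gX y (conj h0 r)) as [_ h]. unfold M. pose proof (Rmax_r x0 abar). lra.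
    - rewrite gE, (hzero y) by lra. nra. }
  assert (xM : forall k, x k <= M).
  { induction k.
    - rewrite hx00. unfold M; apply Rmax_l.
    - rewrite hxS. apply gM. split; [pose proof (xpos k); lra|auto]. }
  assert (hlim : forall l, Un_cv x l -> exists p, 0 <= p /\ f p = p /\ Un_cv x p).
  { intros l hl. 
    assert (l0 : 0 <= l).
    { destruct (Rle_dec 0 l) as [h|h]; [exact h|exfalso].
      destruct (hl (- l)) as [N HN]; [lra|].
      specialize (HN N (Nat.le_refl N)). unfold Rdist in HN.
      pose proof (xpos N). apply Rlt_le, abs_bnd in HN. lra. 
      }
    exists l. split; [exact l0|]. split; [|exact hl].
    assert (c1 : Un_cv (fun k => x (S k)) l).
    { intros eps he. destruct (hl eps he) as [N HN]. exists N. intros n hn.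
      apply HN. lia. }
    assert (c2 : Un_cv (fun k => x (S k)) (g l)).
    { intros eps he. destruct (hl (eps / K)) as [N HN].
      { apply Rdiv_lt_0_compat; lra. }
      exists N. intros n hn. unfold Rdist. rewrite hxS.
      specialize (HN n hn). unfold Rdist in HN.
      eapply Rle_lt_trans.
      - apply glip; [pose proof (xpos n); lra|exact l0].
      - apply Rmult_lt_compat_l with (r := K) in HN; [|lra].
        replace (K * (eps / K)) with eps in HN by (field; lra). exact HN. }
    pose proof (UL_sequence _ _ _ c2 c1) as E.
    rewrite gE in E. assert (alpha * (f l - l) = 0) by lra.
    apply Rmult_integral in H. lra. }
  destruct (Rle_dec (x 1%nat) (x 0%nat)) as [hd|hd].
  - assert (dec : Un_decreasing x).
    { intro n. induction n; [exact hd|].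
      rewrite (hxS (S n)), (hxS n). apply gmono; [rewrite <- hxS; pose proof (xpos (S n)); lra|rewrite <- hxS; exact IHn]. }
    destruct (decreasing_cv x dec) as [l hl].
    { exists 0. intros y [i ->]. unfold opp_seq; pose proof (xpos i); lra. }
    exact (hlim l hl).
  - assert (gro : Un_growing x).
    { intro n. induction n; [lra|].
      rewrite (hxS (S n)), (hxS n). apply gmono; [pose proof (xpos n); lra|rewrite <- hxS; exact IHn]. }
    destruct (growing_cv x gro) as [l hl].
    { exists M. intros y [i ->]. apply xM. }
    exact (hlim l hl).
Qed.
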